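(* Let $\mathcal{D}$ be a basic action theory of the situation calculus and let $\langle \mathcal{D}, \varphi, s\rangle$ be a causal setting. Then $$\mathcal{D}\models \forall a,a',ts,ts'.\; \mathit{CausesDir}(a,ts,\varphi,s)\land \mathit{CausesDir}(a',ts',\varphi,s)\supset a=a'\land ts=ts'.$$
   Context: Situation calculus: $S_0$ is the initial situation and $do(a,s)$ is the situation resulting from performing action $a$ in $s$. $s\sqsubset s'$ means $s'$ is reachable from $s$ by performing one or more actions, and $s\sqsubseteq s'$ abbreviates $s\sqsubset s'\lor s=s'$. $\mathit{Poss}(a,s)$ means $a$ is executable in $s$; $\mathit{Exec}(s)$ abbreviates $\forall a',s'.\,do(a',s')\sqsubseteq s\supset \mathit{Poss}(a',s')$ (in the temporal variant additionally $\mathit{start}(s')\le \mathit{time}(a')$). $s<s'$ abbreviates $s\sqsubset s'\land \mathit{Exec}(s')$, and $s\le s'$ abbreviates $s<s'\lor s=s'$. Situations carry time-stamps: $\mathit{timeStamp}(S_0)=0$ and $\mathit{timeStamp}(do(a,s))=\mathit{timeStamp}(s)+1$. For a situation-suppressed formula $\varphi$, $\varphi[s]$ denotes $\varphi$ with situation argument $s$ restored in all fluents. A causal setting $\langle\mathcal{D},\varphi,s\rangle$ consists of a ground situation $s$ and a situation-suppressed formula $\varphi$ with $\mathcal{D}\models \mathit{Exec}(s)\land\neg\varphi[S_0]\land\varphi[s]$. Direct (primary) cause: $$\mathit{CausesDir}(a,ts,\varphi,s)\doteq \exists s_a.\;\mathit{timeStamp}(s_a)=ts\land (S_0<do(a,s_a)\le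 s)\land\neg\varphi[s_a]\land\forall s'.(do(a,s_a)\le s'\le s\supset\varphi[s']).$$ *)

(* Defs.v *)
(* In every model of the foundational axioms Sigma of a basic action theory,
   situations form a tree isomorphic to finite action sequences rooted at S0;
   we therefore represent situations over an arbitrary action domain A by the
   inductive type [sit A].  The interpretation of Poss and of the
   situation-suppressed formula phi (a predicate on situations) are arbitrary,
   and "D |= ..." becomes quantification over all such interpretations. *)

Set Implicit Arguments.

Inductive sit (A : Type) : Type :=
| S0 : sit A
| do : A -> sit A -> sit A.
Arguments S0 {A}.

Section SitCalc.
Variable A : Type.
Variable Poss : A -> sit A -> Prop.

Inductive sqsub : sit A -> sit A -> Prop :=
| sqsub_do : forall a s, sqsub s (do a s)
| sqsub_step : forall a s s', sqsub s s' -> sqsub s (do a s').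

Definition sqsubeq (s s' : sit A) : Prop := sqsub s s' \/ s = s'.

Definition Exec (s : sit A) : Prop :=
  forall a' s', sqsubeq (do a' s') s -> Poss a' s'.

Definition slt (s s' : sit A) : Prop := sqsub s s' /\ Exec s'.
Definition sle (s s' : sit A) : Prop := slt s s' \/ s = s'.

Fixpoint timeStamp (s : sit A) : nat :=
  match s with S0 => 0 | do _ s' => S (timeStamp s') end.

Definition causal_setting (phi : sit A -> Prop) (s : sit A) : Prop :=
  Exec s /\ ~ phi S0 /\ phi s.

Definition CausesDir (a : A) (ts : nat) (phi : sit A -> Prop) (s : sit A) : Prop :=
  exists sa, timeStamp sa = ts /\ slt S0 (do a sa) /\ sle (do a sa) s /\
    ~ phi sa /\ forall s', sle (do a sa) s' -> sle s' s -> phi s'.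
End SitCalc.

(* Main.v *)
Require Import Defs.
Set Implicit Arguments.

Section H.
Variable A : Type.
Variable Poss : A -> sit A -> Prop.

Lemma sq_trans : forall x y z : sit A, sqsub x y -> sqsub y z -> sqsub x z.
Proof. intros x y z H1 H2; induction H2; constructor; auto. Qed.

Lemma sqe_trans : forall x y z : sit A, sqsubeq x y -> sqsubeq y z -> sqsubeq x z.
Proof.
  unfold sqsubeq; intros x y z [H1|H1] [H2|H2]; subst; auto.
  left; eapply sq_trans; eauto.
Qed.

Lemma sq_inv : forall (x : sit A) b y, sqsub x (do b y) -> sqsubeq x y.
Proof. intros x b y H; inversion H; subst; unfold sqsubeq; auto. Qed.

Lemma exec_down : forall x y : sit A, sqsubeq x y -> Exec Poss y -> Exec Poss x.
Proof. unfold Exec; intros x y H1 H2 a' s' H; apply H2; eapply sqe_trans; eauto. Qed.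

Lemma comparable : forall s x y : sit A, sqsubeq x s -> sqsubeq y s ->
  sqsubeq x y \/ sqsub y x.
Proof.
  induction s as [|b s IH]; intros x y Hx Hy.
  - destruct Hx as [Hx|Hx]; [inversion Hx|]. destruct Hy as [Hy|Hy]; [inversion Hy|].
    subst; left; right; auto.
  - destruct Hx as [Hx|Hx]; destruct Hy as [Hy|Hy].
    + apply sq_inv in Hx; apply sq_inv in Hy; auto.
    + subst. left. left. destruct (sq_inv Hx) as [H|H]; [ constructor 2; auto | subst; constructor].
    + subst. right. destruct (sq_inv Hy) as [H|H]; [ constructor 2; auto | subst; constructor].
    + subst. left; right; auto.
Qed.

Lemma sle_sqe : forall x y : sit A, sle Poss x y -> sqsubeq x y.
Proof. intros x y [[H _]|H]; unfold sqsubeq; auto. Qed.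

Lemma half : forall phi (s : sit A) a sa a' sa',
  Exec Poss s -> sle Poss (do a sa) s -> sle Poss (do a' sa') s ->
  (forall s', sle Poss (do a sa) s' -> sle Poss s' s -> phi s') ->
  ~ phi sa' -> sqsub (do a sa) (do a' sa') -> False.
Proof.
  intros phi s a sa a' sa' Hs H1 H2 Hall Hn Hlt.
  apply Hn. apply Hall.
  - destruct (sq_inv Hlt) as [H|H].
    + left. split; auto. eapply exec_down; [|exact Hs].
      eapply sqe_trans; [| apply sle_sqe; exact H2]. left; constructor.
    + right; auto.
  - left. split; auto.
    destruct (sle_sqe H2) as [H|H].
    + eapply sq_trans; [|exact H]; constructor.
    + rewrite <- H; constructor.
Qed.
End H.

Theorem lemma5p1 (A : Type) (Poss : A -> sit A -> Prop)
  (phi : sit A -> Prop) (s : sit A) :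
  causal_setting Poss phi s ->
  forall (a a' : A) (ts ts' : nat),
    CausesDir Poss a ts phi s /\ CausesDir Poss a' ts' phi s ->
    a = a' /\ ts = ts'.
Proof.
  intros [Hs _] a a' ts ts' [[sa [T1 [_ [L1 [N1 F1]]]]] [sa' [T2 [_ [L2 [N2 F2]]]]]].
  destruct (comparable (sle_sqe L1) (sle_sqe L2)) as [[H|H]|H].
  - exfalso; eapply half; [exact Hs|exact L1|exact L2|exact F1|exact N2|exact H].
  - inversion H; subst; auto.
  - exfalso; eapply half; [exact Hs|exact L2|exact L1|exact F2|exact N1|exact H].
Qed.
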